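(* Let $x_0\in W^2_\infty(0,1)$ be positive with $x_0(0)>0$, let $F(x)(s)=\int_0^s x(s-t)x(t)\,dt$, and let $y^\delta=F(x_0)+\delta\xi$ where $\delta\in(0,1]$ and $\|\xi\|_\infty\le\delta$. Let $\sigma>0$ and let $m\in\mathbb{N}$ with $m\ge 1/\delta$. Let $Q_m$ be the $L_2(0,1)$-orthogonal projection onto piecewise constant functions on the equidistant partition, i.e. $[Q_m y](s)=m\int_{\Delta_i}y(t)\,dt$ for $s\in\Delta_i=[(i-1)/m,i/m)$. If $[Q_m y^\delta](\sqrt\delta)\ge0$, then $$\left|\sqrt{\tfrac{1}{\sqrt\delta}[Q_my^\delta](\sqrt\delta)}-x_0(0)\right|\le\frac{1+4\|x_0\|_{C^1(0,1)}^2}{x_0(0)}\sqrt\delta,$$ and otherwise $$|x_0(0)|\le\frac{1+4\|x_0\|_{C^1(0,1)}^2}{x_0(0)}\sqrt\delta.$$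
   Context: All functions are real-valued. $\|x\|_{C^1(0,1)}:=\max\{\|x\|_\infty,\|x'\|_\infty\}$, where $\|\cdot\|_\infty$ is the essential supremum norm. The last partition interval is taken to contain the endpoint $1$ so that $Q_my$ is defined on $[0,1]$. *)

(* Defs.v *)
From HB Require Import structures.
From mathcomp Require Import all_boot all_order all_algebra.
From mathcomp Require Import all_classical all_reals all_analysis.
Set Implicit Arguments. Unset Strict Implicit. Unset Printing Implicit Defensive.
Import Order.TTheory GRing.Theory Num.Theory.
Import numFieldNormedType.Exports.
Local Open Scope classical_set_scope.
Local Open Scope ring_scope.

(* R : realType. Functions on [0,1] are modelled as
   functions R -> R, only their values on [0,1] matter. *)

(* x in W^2_oo(0,1), represented by its continuous representative:
   x is continuous on [0,1], differentiable on (0,1), and x' is Lipschitz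
   (i.e. x'' exists a.e. and is essentially bounded). *)
Definition W2inf {R : realType} (x : R -> R) : Prop :=
  {within `[0, 1], continuous x} /\
  (forall t, t \in `]0, 1[ -> derivable x t 1) /\
  (exists L : R, forall s t, s \in `]0, 1[ -> t \in `]0, 1[ ->
      `|derive1 x s - derive1 x t| <= L * `|s - t|).

Definition C1norm {R : realType} (x : R -> R) : R :=
  Num.max (sup [set `|x t| | t in [set t | t \in `[0, 1]]])
          (sup [set `|derive1 x t| | t in [set t | t \in `]0, 1[]]).

Definition Fop {R : realType} (x : R -> R) (s : R) : R :=
  Rintegral lebesgue_measure [set t | t \in `[0, s]] (fun t => x (s - t) * x t).

(* index (0-based) of the partition interval containing s; the last interval
   [(m-1)/m, 1] contains the endpoint 1 *)
Definition part_index {R : realType} (m : nat) (s : R) : nat :=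
  minn (Num.truncn (s * m%:R)) m.-1.

Definition Qm {R : realType} (m : nat) (y : R -> R) (s : R) : R :=
  let k := part_index m s in
  m%:R * Rintegral lebesgue_measure
           [set t | t \in `[k%:R / m%:R, k.+1%:R / m%:R]] y.

(* Main.v *)
Require Import Defs.
From HB Require Import structures.
From mathcomp Require Import all_boot all_order all_algebra.
From mathcomp Require Import all_classical all_reals all_analysis.
From mathcomp Require Import ring lra measurable_realfun lebesgue_integral_differentiation.
Import Order.TTheory GRing.Theory Num.Theory.
Import numFieldNormedType.Exports.
Local Open Scope classical_set_scope.
Local Open Scope ring_scope.
Lemma lip_cont {R : realType} (A : set R) (f : R -> R) K :
  (forall x y, A x -> A y -> `|f x - f y| <= K * `|x - y|) -> {within A, continuous f}.
Proof.
move=> H; apply/subspace_continuousP => x Ax.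
apply/cvgrPdist_le => /= e e0.
have K1 : 0 < `|K| + 1 by rewrite ltr_wpDl.
exists (e / (`|K| + 1)) => /=; first by rewrite divr_gt0.
move=> t /= xt At.
apply: (le_trans (H _ _ Ax At)).
have ed : (`|K| + 1) * (e / (`|K| + 1)) = e by rewrite mulrC divfK // gt_eqF.
move: xt ed; move: (e / (`|K| + 1)) => d xt <-.
have := normr_ge0 (x - t); have := ler_norm K; have := normr_ge0 K.
move: (`|x - t| : R) (`|K| : R) xt => u v; nra.
Qed.

Lemma lip_meas {R : realType} (a b : R) (f : R -> R) K :
  (forall x y, x \in `[a, b] -> y \in `[a, b] -> `|f x - f y| <= K * `|x - y|) ->
  measurable_fun `[a, b] f.
Proof.
move=> H; apply: subspace_continuous_measurable_fun => //.
apply: (@lip_cont _ _ _ K) => x y /= hx hy; by apply: H.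
Qed.
Section S.
Context {R : realType}.
Notation mu := (@lebesgue_measure R).

Lemma aeS' (P Q : R -> Prop) : (forall t, P t -> Q t) ->
  {ae mu, forall t, P t} -> {ae mu, forall t, Q t}.
Proof.
move=> PQ [A [mA A0 HA]]; exists A; split => // t /= nQ; apply: HA => /= Pt.
by apply: nQ; apply: PQ.
Qed.

Lemma ae_bnd_int (D : set R) (f : R -> R) (M : R) : measurable D -> (mu D < +oo)%E ->
  measurable_fun D f -> {ae mu, forall t, D t -> `|f t| <= M} ->
  mu.-integrable D (EFin \o f).
Proof.
move=> mD Dfin mf Hae; apply/integrableP; split; first exact/measurable_EFinP.
apply: (@le_lt_trans _ _ (\int[mu]_(x in D) (cst `|M|%:E) x)%E).
  apply: ae_ge0_le_integral => //.
  - apply: measurableT_comp => //; exact/measurable_EFinP.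
  - by move=> x _; rewrite /= lee_fin.
  - apply: aeS' Hae => t H Dt; rewrite /= lee_fin.
    exact: (le_trans (H Dt) (ler_norm M)).
by rewrite integral_cst // lte_mul_pinfty.
Qed.

Lemma Rint_bound (D : set R) (f : R -> R) (c e : R) : measurable D -> (mu D < +oo)%E ->
  0 <= e -> measurable_fun D f -> {ae mu, forall t, D t -> `|f t - c| <= e} ->
  `|Rintegral mu D f - c * fine (mu D)| <= e * fine (mu D).
Proof.
move=> mD Dfin e0 mf Hae.
have mfc : measurable_fun D (fun t => f t - c) by apply: measurable_funB.
have ifc : mu.-integrable D (EFin \o (fun t => f t - c)).
  by apply: (@ae_bnd_int _ _ (e)).
have ic : mu.-integrable D (EFin \o (fun t : R => c)).
  apply: (@ae_bnd_int _ _ (`|c|)) => //; apply: aeW => t _ //.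
have iff : mu.-integrable D (EFin \o f).
  apply: (@ae_bnd_int _ _ (`|c| + e)) => //.
  apply: aeS' Hae => t H Dt.
  have := H Dt; have := ler_normD (f t - c) c; rewrite subrK; lra.
rewrite -Rintegral_cst // -RintegralB //.
apply: le_trans; first exact: le_normr_Rintegral.
have -> : e * fine (mu D) = fine (e%:E * mu D)%E.
  by rewrite fineM // ge0_fin_numE.
rewrite /Rintegral; apply: fine_le.
- rewrite ge0_fin_numE; last exact: integral_ge0.
  by case/integrableP: ifc.
- by rewrite fin_numM // ge0_fin_numE.
- rewrite -integral_cst //; apply: ae_ge0_le_integral => //.
  + by apply/measurable_EFinP; apply: measurableT_comp.
Qed.
End S.
Lemma C1_facts {R : realType} (x0 : R -> R) : W2inf x0 ->
  (forall t, t \in `[0, 1] -> `|x0 t| <= C1norm x0) /\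
  (forall a b, a \in `[0, 1] -> b \in `[0, 1] -> `|x0 a - x0 b| <= C1norm x0 * `|a - b|).
Proof.
case=> cont [der [L HL]].
set S1 := [set `|x0 t| | t in [set t | t \in `[0, 1]]].
set S2 := [set `|derive1 x0 t| | t in [set t | t \in `]0, 1[]].
have h12 : (2^-1 : R) \in `]0, 1[ by rewrite in_itv /=; apply/andP; split; lra.
have ub2 : has_ubound S2.
  exists (`|derive1 x0 2^-1| + `|L|) => _ [s /= hs <-].
  have := HL _ _ hs h12.
  have := ler_normD (derive1 x0 s - derive1 x0 2^-1) (derive1 x0 2^-1).
  rewrite subrK.
  have : `|s - 2^-1| <= 1.
    move: hs; rewrite in_itv /= => /andP[? ?]; rewrite ler_norml; apply/andP; split; lra.
  have := ler_norm L; have := normr_ge0 (s - 2^-1); have := normr_ge0 L; nra.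
set D2 := sup S2.
have hD2 s : s \in `]0, 1[ -> `|derive1 x0 s| <= D2.
  by move=> hs; apply: ub_le_sup => //; exists s.
have lip a b : a \in `[0, 1] -> b \in `[0, 1] -> `|x0 a - x0 b| <= D2 * `|a - b|.
  wlog ab : a b / a <= b.
    move=> W ha hb; case: (leP a b) => hab; first exact: W.
    by rewrite distrC (distrC a); apply: W => //; apply: ltW.
  move=> ha hb; case: (eqVneq a b) => [->|nab]; first by rewrite !subrr normr0 mulr0.
  have altb : a < b by rewrite lt_neqAle nab.
  have [c hc hmvt] : exists2 c, c \in `]a, b[ & x0 b - x0 a = derive1 x0 c * (b - a).
    apply: MVT => //.
    - move=> t ht; rewrite derive1E; apply: derivableP; apply: der.
      move: ha hb ht; rewrite !in_itv /= => /andP[? ?] /andP[? ?] /andP[? ?]; apply/andP; split; lra.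
    - apply: continuous_subspaceW cont => t /=.
      move: ha hb; rewrite !in_itv /= => /andP[? ?] /andP[? ?] /andP[? ?]; apply/andP; split; lra.
  rewrite distrC (distrC a) hmvt normrM; apply: ler_wpM2r => //; apply: hD2.
  move: ha hb hc; rewrite !in_itv /= => /andP[? ?] /andP[? ?] /andP[? ?]; apply/andP; split; lra.
have h0 : (0 : R) \in `[0, 1] by rewrite in_itv /= lexx ler01.
have ub1 : has_ubound S1.
  exists (`|x0 0| + D2) => _ [s /= hs <-].
  have := lip _ _ hs h0; have := ler_normD (x0 s - x0 0) (x0 0); rewrite subrK.
  have : `|s - 0| <= 1 by move: hs; rewrite subr0 in_itv /= => /andP[? ?]; rewrite ger0_norm.
  have : 0 <= D2 by apply: le_trans (hD2 _ h12).
  nra.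
have hS1 : sup S1 <= C1norm x0 by rewrite /C1norm le_max lexx.
have hS2 : D2 <= C1norm x0 by rewrite /C1norm le_max lexx orbT.
split.
  move=> t ht; apply: le_trans hS1; apply: ub_le_sup => //; exists t => //.
move=> a b ha hb; apply: (le_trans (lip _ _ ha hb)); apply: ler_wpM2r => //.
Qed.

Lemma mu_itv {R : realType} (ba bb : bool) (a b : R) : a <= b ->
  lebesgue_measure [set t | t \in Interval (BSide ba a) (BSide bb b)] = (b - a)%:E.
Proof.
move=> ab; have := lebesgue_measure_itv (Interval (BSide ba a) (BSide bb b)).
rewrite /= => ->; case: (eqVneq a b) => [->|nab].
  by rewrite subrr; case: ifP => // _; rewrite EFinN subee.
have altb : a < b by rewrite lt_neqAle nab.
by rewrite ifT ?EFinN // lteBSide /=; case: (_ && _) => //; apply: ltW.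
Qed.

Ltac itvs := rewrite ?in_itv /=; repeat match goal with
  | H : is_true (_ \in Interval _ _) |- _ => rewrite in_itv /= in H; move/andP: H => [? ?]
  end; try (apply/andP; split); lra.

Lemma prod_bound {R : realType} (a a' b b' c u v : R) : `|a'| <= c -> `|b| <= c ->
  `|a - a'| <= u -> `|b - b'| <= v -> `|a * b - a' * b'| <= c * u + c * v.
Proof.
move=> h1 h2 h3 h4.
have -> : a * b - a' * b' = (a - a') * b + a' * (b - b') by ring.
apply: (le_trans (ler_normD _ _)); rewrite !normrM.
have := normr_ge0 (a - a'); have := normr_ge0 a'; have := normr_ge0 b;
  have := normr_ge0 (b - b'); nra.
Qed.

Section Fop.
Context {R : realType} (x0 : R -> R) (C : R).
Hypothesis C0 : 0 <= C.
Hypothesis Hb : forall t, t \in `[0, 1] -> `|x0 t| <= C.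
Hypothesis Hl : forall a b, a \in `[0, 1] -> b \in `[0, 1] -> `|x0 a - x0 b| <= C * `|a - b|.
Notation mu := (@lebesgue_measure R).
Let g s t := x0 (s - t) * x0 t.

Lemma g_lip (s : R) : s \in `[0, 1] -> forall t t', t \in `[0, s] -> t' \in `[0, s] ->
  `|g s t - g s t'| <= (C * C + C * C) * `|t - t'|.
Proof.
move=> hs t t' ht ht'; rewrite mulrDl -!mulrA; apply: prod_bound.
- apply: Hb; itvs.
- apply: Hb; itvs.
- have -> : t - t' = (s - t') - (s - t) by ring.
  rewrite distrC; apply: Hl; itvs.
- apply: Hl; itvs.
Qed.

Lemma g_meas (s : R) : s \in `[0, 1] -> measurable_fun [set t | t \in `[0, s]] (g s).
Proof. move=> hs; apply: (@lip_meas R 0 s (g s) (C * C + C * C)); exact: g_lip. Qed.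

Lemma g_int (s : R) : s \in `[0, 1] -> mu.-integrable [set t | t \in `[0, s]] (EFin \o g s).
Proof.
move=> hs; apply: (@ae_bnd_int _ _ _ (C * C)) => //.
- by rewrite mu_itv ?ltry //; itvs.
- exact: g_meas.
- apply: aeW => t /= ht; rewrite /g normrM; apply: ler_pM => //; apply: Hb; itvs.
Qed.

Lemma F1 (s : R) : s \in `[0, 1] -> `|Fop x0 s - x0 0 ^+ 2 * s| <= C * C * s * s.
Proof.
move=> hs; have s0 : 0 <= s by itvs.
have := @Rint_bound _ [set t | t \in `[0, s]] (g s) (x0 0 ^+ 2) (C * C * s).
rewrite mu_itv //= subr0; apply => //.
- by rewrite ltry.
- by rewrite mulr_ge0 // mulr_ge0.
- exact: g_meas.
- apply: aeW => t /= ht; rewrite expr2 /g.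
  have -> : C * C * s = C * (C * (s - t)) + C * (C * t) by ring.
  apply: prod_bound.
  + apply: Hb; itvs.
  + apply: Hb; itvs.
  + apply: (le_trans (Hl (s - t) 0 _ _)); [itvs|itvs|].
    rewrite subr0 ger0_norm; [by []|itvs].
  + apply: (le_trans (Hl t 0 _ _)); [itvs|itvs|].
    rewrite subr0 ger0_norm; [by []|itvs].
Qed.

Lemma F_lip1 (s s' : R) : s \in `[0, 1] -> s' \in `[0, 1] -> s <= s' ->
  `|Fop x0 s' - Fop x0 s| <= (C * C + C * C) * (s' - s).
Proof.
move=> hs hs' ss'.
have s0 : 0 <= s by itvs.
have mA : measurable [set t : R | t \in `[0, s]] by exact: measurable_itv.
have mB : measurable [set t : R | t \in `]s, s']] by exact: measurable_itv.
have mAB : measurable [set t : R | t \in `[0, s']] by exact: measurable_itv.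
have AB : [set t : R | t \in `[0, s']] = [set t | t \in `[0, s]] `|` [set t | t \in `]s, s']].
  apply/seteqP; split => t /=.
  - rewrite !in_itv /= => /andP[h1 h2]; case: (leP t s) => hts; [left|right];
      apply/andP; split => //.
  - by case; rewrite !in_itv /= => /andP[? ?]; apply/andP; split; lra.
have sA : [set t : R | t \in `[0, s]] `<=` [set t | t \in `[0, s']].
  by rewrite AB => t ht; left.
have sB : [set t : R | t \in `]s, s']] `<=` [set t | t \in `[0, s']].
  by rewrite AB => t ht; right.
have e1 : Fop x0 s' = Rintegral mu [set t | t \in `[0, s]] (g s') +
                      Rintegral mu [set t | t \in `]s, s']] (g s').
  rewrite /Fop -/(g s') AB; apply: Rintegral_setU => //.
    by rewrite -AB; exact: g_int.
  apply/disj_setPS => t [] /=; rewrite !in_itv /= => /andP[? ?] /andP[? ?]; lra.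
have b1 : `|Rintegral mu [set t | t \in `[0, s]] (g s') - Fop x0 s|
          <= C * C * (s' - s) * s.
  have i1 : mu.-integrable [set t | t \in `[0, s]] (EFin \o g s') .
    apply: (@integrableS _ _ _ mu _ _ _ _ _ sA); [exact: measurable_itv|exact: measurable_itv|exact: g_int].
  rewrite /Fop -/(g s) -RintegralB //; last exact: g_int.
  have := @Rint_bound _ [set t | t \in `[0, s]] (fun t => g s' t - g s t) 0 (C * C * (s' - s)).
  rewrite mu_itv //= subr0 mul0r subr0; apply => //.
  - by rewrite ltry.
  - by rewrite mulr_ge0 // ?mulr_ge0 // subr_ge0.
  - apply: measurable_funB; last exact: g_meas.
    apply: (measurable_funS (E := [set t | t \in `[0, s']])); [exact: measurable_itv| |exact: g_meas]; by [].
  - apply: aeW => t /= ht; rewrite subr0 /g.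
    have -> : C * C * (s' - s) = C * (C * (s' - s)) + C * 0 by ring.
    apply: prod_bound.
    + apply: Hb; itvs.
    + apply: Hb; itvs.
    + apply: (le_trans (Hl (s' - t) (s - t) _ _)); [itvs|itvs|].
      have -> : s' - t - (s - t) = s' - s by ring.
      rewrite ger0_norm; [by []|itvs].
    + by rewrite subrr normr0.
have b2 : `|Rintegral mu [set t | t \in `]s, s']] (g s')| <= C * C * (s' - s).
  have := @Rint_bound _ [set t | t \in `]s, s']] (g s') 0 (C * C).
  rewrite mu_itv //= mul0r subr0; apply => //.
  - by rewrite ltry.
  - by rewrite mulr_ge0.
  - apply: (measurable_funS (E := [set t | t \in `[0, s']])); [exact: measurable_itv| |exact: g_meas]; by [].
  - apply: aeW => t /= ht; rewrite subr0 /g normrM; apply: ler_pM => //; apply: Hb; itvs.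
rewrite e1.
have -> : Rintegral mu [set t | t \in `[0, s]] (g s') + Rintegral mu [set t | t \in `]s, s']] (g s') - Fop x0 s
  = (Rintegral mu [set t | t \in `[0, s]] (g s') - Fop x0 s) + Rintegral mu [set t | t \in `]s, s']] (g s') by ring.
apply: (le_trans (ler_normD _ _)).
have hk : C * C * (s' - s) * s <= C * C * (s' - s).
  rewrite -[X in _ <= X]mulr1; apply: ler_wpM2l; last by itvs.
  by rewrite !mulr_ge0 // subr_ge0.
have -> : (C * C + C * C) * (s' - s) = C * C * (s' - s) + C * C * (s' - s) by ring.
apply: lerD => //; exact: le_trans b1 hk.
Qed.

Lemma F_lip (a b : R) : a \in `[0, 1] -> b \in `[0, 1] ->
  `|Fop x0 a - Fop x0 b| <= (C * C + C * C) * `|a - b|.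
Proof.
move=> ha hb; case: (leP b a) => ab.
  by rewrite [`|a - b|]ger0_norm ?subr_ge0 //; apply: F_lip1.
rewrite distrC (distrC a) [`|b - a|]ger0_norm; last by rewrite subr_ge0 ltW.
by apply: F_lip1 => //; apply: ltW.
Qed.

Lemma F_meas (a b : R) : 0 <= a -> b <= 1 -> measurable_fun [set t | t \in `[a, b]] (Fop x0).
Proof.
move=> a0 b1; apply: (@lip_meas R a b (Fop x0) (C * C + C * C)) => x y hx hy.
apply: F_lip; itvs.
Qed.
End Fop.
Lemma arith4 {R : realType} (t u : R) : 0 <= t -> t <= 1 -> 0 < u -> u <= 1 ->
  `|t - u| <= u ^+ 2 -> t ^+ 2 + `|t - u| <= 4 * u ^+ 2.
Proof.
move=> t0 t1 u0 u1 h; case: (leP t u) => tu.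
  rewrite ler0_norm ?subr_le0 // in h *.
  have : t ^+ 2 <= u ^+ 2 by nra.
  nra.
rewrite gtr0_norm ?subr_gt0 // in h *.
case: (leP u (3/5)) => u35; nra.
Qed.

Lemma idx_facts {R : realType} (m : nat) (u : R) : (0 < m)%N -> 0 < u -> u <= 1 ->
  ((part_index m u).+1 <= m)%N /\ (part_index m u)%:R / m%:R <= u /\
  u <= (part_index m u).+1%:R / m%:R.
Proof.
move=> m0 u0 u1; have m0' : (0 : R) < m%:R by rewrite ltr0n.
rewrite /part_index; set n := Num.truncn (u * m%:R).
have /andP[h1 h2] := truncn_itv (mulr_ge0 (ltW u0) (ler0n R m)).
rewrite -/n in h1 h2.
case: (leqP n m.-1) => h.
  split; first by rewrite -ltnS prednK in h.
  by split; [rewrite ler_pdivrMr | rewrite ler_pdivlMr ?ltW].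

rewrite prednK //; split => //.
have hm : m%:R <= n%:R :> R by rewrite ler_nat; rewrite -ltnS prednK in h.
have uu : 1 <= u.
  by rewrite -(ler_pM2r m0') mul1r (le_trans hm h1).
have -> : u = 1 by apply/eqP; rewrite eq_le u1 uu.
split; last by rewrite divff // gt_eqF.
rewrite ler_pdivrMr // mul1r ler_nat; exact: leq_pred.
Qed.

Local Close Scope classical_set_scope.

Theorem proposition2p11 (R : realType) (x0 xi : R -> R) (delta sigma : R) (m : nat) :
  W2inf x0 ->
  (forall t, t \in `[0, 1] -> 0 <= x0 t) ->
  0 < x0 0 ->
  0 < delta -> delta <= 1 ->
  measurable_fun (`[0, 1]%classic : set R) xi ->
  {ae (@lebesgue_measure R), forall t : R, t \in `[0, 1] -> `|xi t| <= delta} ->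
  0 < sigma ->
  1 / delta <= m%:R ->
  let ydelta := fun s => Fop x0 s + delta * xi s in
  let q := Qm m ydelta (Num.sqrt delta) in
  let bound := (1 + 4 * C1norm x0 ^+ 2) / x0 0 * Num.sqrt delta in
  (0 <= q -> `|Num.sqrt (q / Num.sqrt delta) - x0 0| <= bound) /\
  (q < 0 -> `|x0 0| <= bound).
Proof.
move=> W x0nn x00 d0 d1 mxi aexi sig0 hm ydelta q bound.
have [Hb Hl] := @C1_facts R x0 W.
set C := C1norm x0 in Hb Hl bound *.
have h0 : (0:R) \in `[0, 1] by rewrite in_itv /= lexx ler01.
have hx0C : x0 0 <= C by move: (Hb _ h0); rewrite ger0_norm // ltW.
have C0 : 0 <= C by exact: le_trans (ltW x00) hx0C.
set u := Num.sqrt delta in q bound *.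
have u0 : 0 < u by rewrite sqrtr_gt0.
have uu : u ^+ 2 = delta by rewrite sqr_sqrtr ?ltW.
have u1 : u <= 1 by nra.
have hd : 1 <= 1 / delta by rewrite ler_pdivlMr // mul1r.
have m1 : (1 : R) <= m%:R by exact: le_trans hd hm.
have m0 : (0 < m)%N by rewrite -(ler_nat R 1).
have m0' : (0 : R) < m%:R by lra.
have im : 1 / m%:R <= delta.
  by move: hm; rewrite !ler_pdivrMr // mulrC.
have [hk1 [hk2 hk3]] := @idx_facts R m u m0 u0 u1.
set k := part_index m u in hk1 hk2 hk3.
set a := k%:R / m%:R in hk2 *; set b := k.+1%:R / m%:R in hk3 *.
have a0 : 0 <= a by rewrite /a divr_ge0.
have b1 : b <= 1 by rewrite /b ler_pdivrMr // mul1r ler_nat.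
have ba : b - a = 1 / m%:R.
  rewrite /a /b (_ : k.+1%:R = k%:R + 1 :> R); last by rewrite -addn1 natrD.
  by rewrite mulrDl addrAC subrr add0r.
have ab : a <= b by lra.
have qE : q = m%:R * Rintegral lebesgue_measure [set t | t \in `[a, b]] ydelta by [].
set e := 4 * (C * C) * u ^+ 2 + u ^+ 4.
have hI : `|Rintegral lebesgue_measure [set t | t \in `[a, b]] ydelta -
            (u * x0 0 ^+ 2) * fine (lebesgue_measure [set t | t \in `[a, b]])|
          <= e * fine (lebesgue_measure [set t | t \in `[a, b]]).
  apply: Rint_bound.
  - exact: measurable_itv.
  - by rewrite mu_itv ?ltry.
  - by rewrite /e addr_ge0 // ?mulr_ge0 // ?exprn_ge0 // ltW.
  - rewrite /ydelta; apply: measurable_funD; first exact: (@F_meas R x0 C C0 Hb Hl a b a0 b1).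
    apply: measurable_funM => //.
    apply: (measurable_funS _ _ mxi); first exact: measurable_itv.
    by move=> t /=; rewrite !in_itv /= => /andP[? ?]; apply/andP; split; lra.
  - apply: aeS' aexi => t H ht.
    have t01 : t \in `[0, 1] by move: ht; rewrite /= !in_itv /= => /andP[? ?]; apply/andP; split; lra.
    have hxi := H t01.
    have hF := @F1 R x0 C C0 Hb Hl t t01.
    have htu : `|t - u| <= u ^+ 2.
      move: ht; rewrite /= in_itv /= => /andP[? ?].
      rewrite ler_norml; apply/andP; split; lra.
    have t0 : 0 <= t by itvs.
    have t1 : t <= 1 by itvs.
    have h4 := @arith4 R t u t0 t1 u0 u1 htu.
    rewrite /ydelta.
    have -> : Fop x0 t + delta * xi t - u * x0 0 ^+ 2 =
      (Fop x0 t - x0 0 ^+ 2 * t) + x0 0 ^+ 2 * (t - u) + delta * xi t by ring.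
    apply: (le_trans (ler_normD _ _)); apply: (le_trans (lerD (ler_normD _ _) (lexx _))).
    rewrite !normrM (ger0_norm (ltW d0)) (ger0_norm (ltW x00)) -expr2.
    have hx2 : x0 0 ^+ 2 <= C * C by rewrite expr2; nra.
    have hA : x0 0 ^+ 2 * `|t - u| <= C * C * `|t - u| by apply: ler_wpM2r.
    have hX : delta * `|xi t| <= u ^+ 4.
      have -> : u ^+ 4 = delta * delta by rewrite -uu -exprD.
      by apply: ler_wpM2l; [exact: ltW|].
    have hC : C * C * (t ^+ 2 + `|t - u|) <= C * C * (4 * u ^+ 2).
      by apply: ler_wpM2l => //; rewrite mulr_ge0.
    have hF' : `|Fop x0 t - x0 0 ^+ 2 * t| <= C * C * t ^+ 2.
      by move: hF; rewrite expr2 mulrA.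
    rewrite /e; move: hC; rewrite mulrDr => hC.
    lra.
rewrite mu_itv //= in hI.
have hq : `|q - u * x0 0 ^+ 2| <= e.
  rewrite qE.
  have -> : m%:R * Rintegral lebesgue_measure [set t | t \in `[a, b]] ydelta - u * x0 0 ^+ 2
    = m%:R * (Rintegral lebesgue_measure [set t | t \in `[a, b]] ydelta - u * x0 0 ^+ 2 * (b - a)).
    by rewrite ba; field; rewrite gt_eqF.
  rewrite normrM (ger0_norm (ltW m0')).
  apply: (le_trans (ler_wpM2l (ltW m0') hI)); rewrite ba.
  have -> : m%:R * (e * (1 / m%:R)) = e by field; rewrite gt_eqF.
  by [].
have hE : `|q / u - x0 0 ^+ 2| <= (1 + 4 * C ^+ 2) * u.
  have -> : q / u - x0 0 ^+ 2 = (q - u * x0 0 ^+ 2) / u.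
    by field; rewrite gt_eqF.
  rewrite normrM (gtr0_norm (_ : 0 < u^-1)); last by rewrite invr_gt0.
  rewrite ler_pdivrMr //.
  apply: (le_trans hq); rewrite /e expr2.
  have : u ^+ 4 <= u ^+ 2.
    by rewrite (_ : 4%N = (2 + 2)%N) // exprD ler_piMl ?exprn_ge0 // ?(ltW u0) // expr2; nra.
  nra.
split.
  move=> q0; have qu0 : 0 <= q / u by rewrite divr_ge0 // ltW.
  have r0 := sqrtr_ge0 (q / u); have r2 := sqr_sqrtr qu0.
  move: (Num.sqrt (q / u)) r0 r2 => r r0 r2.
  rewrite /bound mulrAC ler_pdivlMr //.
  have e1 : `|r - x0 0| * (r + x0 0) = `|q / u - x0 0 ^+ 2|.
    rewrite -(ger0_norm (addr_ge0 r0 (ltW x00))) -normrM -r2; congr `|_|; ring.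
  have : `|r - x0 0| * x0 0 <= `|r - x0 0| * (r + x0 0).
    by apply: ler_wpM2l => //; lra.
  lra.
move=> qn; rewrite /bound mulrAC (ger0_norm (ltW x00)) ler_pdivlMr //.
have : q / u < 0 by rewrite ltr_pdivrMr // mul0r.
have := ler_norm (x0 0 ^+ 2 - q / u); rewrite distrC in hE.
rewrite expr2 in hE *; lra.
Qed.
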